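(* Let $G=(V,E)$ be a locally finite, connected, infinite graph, fix a vertex $x\in V$, and consider Bernoulli$(p)$ bond percolation on $G$. Then \[ p'_{\mathrm{cut,E}}=p'_{\mathrm{cut,V}}=p_{\mathrm{c}}. \]
   Context: Bernoulli$(p)$ bond percolation on $G$ keeps each edge independently as ''open'' with probability $p$ and otherwise declares it ''closed''; $\mathbb{P}_p$ denotes its law. An open path is a path all of whose edges are open; $x\longleftrightarrow\infty$ is the event that the open cluster of $x$ has infinite diameter. The critical probability is $p_{\mathrm{c}}=\sup\{p\ge 0:\mathbb{P}_p(x\longleftrightarrow\infty)=0\}$. A vertex cutset separating $x$ from infinity is a set $\Pi\subset V$ such that the connected component of $x$ in the graph obtained from $G$ by deleting the vertices of $\Pi$ is finite; an edge cutset separating $x$ from infinity is a set $\Pi_E\subset E$ such that the connected component of $x$ in $G$ with the edges of $\Pi_E$ deleted is finite. For a vertex cutset $\Pi$ and $v\in\Pi$, $A(x,v,\Pi)$ is the event that $x$ is connected to $v$ by an open path that uses no vertex of $\Pi\setminus\{v\}$. For an edge cutset $\Pi_E$ and $e\in\Pi_E$, $A(x,e,\Pi_E)$ is the event that $e$ is open and $x$ is connected to $e$ by an open path that uses no edge of $\Pi_E\setminus\{e\}$. Define $p'_{\mathrm{cut,V}}=\sup\{p\ge0:\inf_{\Pi}\sum_{v\in\Pi}\mathbb{P}_p[A(x,v,\Pi)]=0\}$, the infimum over all vertex cutsets $\Pi$ separating $x$ from infinity, and $p'_{\mathrm{cut,E}}=\sup\{p\ge0:\inf_{\Pi_E}\sum_{e\in\Pi_E}\mathbb{P}_p[A(x,e,\Pi_E)]=0\}$,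 the infimum over all edge cutsets $\Pi_E$ separating $x$ from infinity. *)

(* Defs.v *)
From HB Require Import structures.
From Stdlib Require Import Relations.
From mathcomp Require Import all_boot all_algebra.
From mathcomp Require Import all_classical all_reals all_analysis.
Set Implicit Arguments. Unset Strict Implicit. Unset Printing Implicit Defensive.
Import GRing.Theory Num.Theory.
Local Open Scope classical_set_scope.
Local Open Scope ring_scope.

(** * Graphs
  A graph is given by a vertex type [V], an edge type [E] and endpoint maps
  [src tgt : E -> V] (each edge carries an arbitrary orientation, which plays
  no role).  [simple_graph] forbids loops and parallel edges. *)

Definition links {V E : Type} (src tgt : E -> V) (e : E) (u v : V) : Prop :=
  (src e = u /\ tgt e = v) \/ (src e = v /\ tgt e = u).

Definition simple_graph {V E : Type} (src tgt : E -> V) : Prop :=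
  (forall e, src e <> tgt e) /\
  (forall e e', links src tgt e (src e') (tgt e') -> e = e').

Definition locally_finite {V E : Type} (src tgt : E -> V) : Prop :=
  forall v : V, finite_set [set e | src e = v \/ tgt e = v].

(** [reach okE okV u v]: there is a path from [u] to [v] all of whose edges
    satisfy [okE] and all of whose vertices (including both endpoints, unless
    [u = v] and the path is trivial) satisfy [okV]. *)
Definition reach {V E : Type} (src tgt : E -> V) (okE : E -> Prop)
  (okV : V -> Prop) : relation V :=
  clos_refl_trans V (fun u w => okV u /\ okV w /\
                                 exists e, okE e /\ links src tgt e u w).

Definition connected_graph {V E : Type} (src tgt : E -> V) : Prop :=
  forall u v : V, reach src tgt (fun _ => True) (fun _ => True) u v.

Definition infinite_graph {V : Type} : Prop := ~ finite_set [set: V].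

Fixpoint walk_le {V E : Type} (src tgt : E -> V) (n : nat) (u v : V) : Prop :=
  match n with
  | 0 => u = v
  | n'.+1 => u = v \/ exists w e, links src tgt e u w /\ walk_le src tgt n' w v
  end.

(** Configurations: [omega e = true] means that [e] is open. *)
Definition config (E : Type) := E -> bool.

Definition cylinders (E : Type) : set (set (config E)) :=
  [set A | exists e : E, A = [set w : config E | w e = true]].

Definition Omega (E : Type) := g_sigma_algebraType (@cylinders E).

(** [P] is Bernoulli(p) bond percolation: the states of distinct edges are
    independent and each edge is open with probability [p]; this determines the
    product measure on the product sigma-algebra. *)
Definition bernoulli_percolation {R : realType} {E : choiceType} (p : R)
  (P : probability (Omega E) R) : Prop :=
  forall (F : seq E) (a : E -> bool), uniq F ->
    P [set w : Omega E | forall e, e \in F -> w e = a e] =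
    (\prod_(e <- F) (if a e then p else 1 - p))%:E.

Definition open_reach_V {V E : Type} (src tgt : E -> V) (w : config E)
  (S : set V) (u v : V) : Prop :=
  reach src tgt (fun e => w e = true) (fun z => ~ S z) u v.

Definition open_reach_E {V E : Type} (src tgt : E -> V) (w : config E)
  (S : set E) (u v : V) : Prop :=
  reach src tgt (fun e => w e = true /\ ~ S e) (fun _ => True) u v.

(** [x <-> infinity]: the open cluster of [x] has infinite diameter, i.e. it
    is not contained in any ball B_G(x, n). *)
Definition conn_inf {V E : Type} (src tgt : E -> V) (x : V) : set (config E) :=
  [set w | forall n : nat, exists y, open_reach_V src tgt w set0 x y /\
                                   ~ walk_le src tgt n x y].

Definition vertex_cutset {V E : Type} (src tgt : E -> V) (x : V) (Pi : set V)
  : Prop :=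
  finite_set [set y | reach src tgt (fun _ => True) (fun z => ~ Pi z) x y].

Definition edge_cutset {V E : Type} (src tgt : E -> V) (x : V) (Pi : set E)
  : Prop :=
  finite_set [set y | reach src tgt (fun e => ~ Pi e) (fun _ => True) x y].

Definition A_V {V E : Type} (src tgt : E -> V) (x v : V) (Pi : set V)
  : set (config E) :=
  [set w | open_reach_V src tgt w (Pi `\ v) x v].

Definition A_E {V E : Type} (src tgt : E -> V) (x : V) (e : E) (Pi : set E)
  : set (config E) :=
  [set w | w e = true /\
     (open_reach_E src tgt w (Pi `\ e) x (src e) \/
      open_reach_E src tgt w (Pi `\ e) x (tgt e))].

Section Crit.
Context {R : realType} {V E : choiceType} (src tgt : E -> V) (x : V)
  (Pf : R -> probability (Omega E) R).

Definition p_c : R :=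
  sup [set p : R | 0 <= p <= 1 /\ Pf p (conn_inf src tgt x : set (Omega E)) = 0%E].

Definition p'_cut_V : R :=
  sup [set p : R | 0 <= p <= 1 /\
    ereal_inf [set s | exists Pi : set V, vertex_cutset src tgt x Pi /\
        s = (\esum_(v in Pi) Pf p (A_V src tgt x v Pi : set (Omega E)))%E]
    = 0%E].

Definition p'_cut_E : R :=
  sup [set p : R | 0 <= p <= 1 /\
    ereal_inf [set s | exists Pi : set E, edge_cutset src tgt x Pi /\
        s = (\esum_(e in Pi) Pf p (A_E src tgt x e Pi : set (Omega E)))%E]
    = 0%E].
End Crit.

(* Main.v *)
Require Import Defs.
From HB Require Import structures.
From Stdlib Require Import Relations.
From mathcomp Require Import all_boot all_algebra.
From mathcomp Require Import all_classical all_reals all_analysis.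
From mathcomp Require Import ring lra.
Set Implicit Arguments. Unset Strict Implicit. Unset Printing Implicit Defensive.
Import order.Order.TTheory GRing.Theory Num.Theory.
From mathcomp.real_closed Require Import polyrcf.
Local Open Scope classical_set_scope.
Local Open Scope ring_scope.

Section ExDef.
Variables (R : realType) (E : choiceType).

Definition upd (w : E -> bool) (e : E) (b : bool) : E -> bool :=
  fun e' => if e' == e then b else w e'.
Definition w0 : E -> bool := fun _ => false.

Fixpoint ExP (F : seq E) (X : (E -> bool) -> R) : {poly R} :=
  match F with
  | [::] => (X w0)%:P
  | e :: F' => 'X * ExP F' (fun w => X (upd w e true))
               + (1 - 'X) * ExP F' (fun w => X (upd w e false))
  end.

Definition Ex (r : R) F X := (ExP F X).[r].

Lemma Ex_cons r e F X : Ex r (e :: F) X =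
  r * Ex r F (fun w => X (upd w e true)) + (1 - r) * Ex r F (fun w => X (upd w e false)).
Proof. by rewrite /Ex /= !hornerE. Qed.

Lemma Ex_nil r X : Ex r [::] X = X w0.
Proof. by rewrite /Ex /= hornerC. Qed.

Lemma upd_same w e b b' : upd (upd w e b) e b' = upd w e b'.
Proof. by apply: funext => e'; rewrite /upd; case: eqP. Qed.

Lemma upd_comm w e e' b b' : e != e' ->
  upd (upd w e b) e' b' = upd (upd w e' b') e b.
Proof.
move=> ne; apply: funext => z; rewrite /upd.
case: (eqVneq z e') => [ze'|_]; case: (eqVneq z e) => [ze|_] //.
by move: ne; rewrite -ze -ze' eqxx.
Qed.

Lemma upd_id w e : upd w e (w e) = w.
Proof. by apply: funext => z; rewrite /upd; case: eqP => [->|]. Qed.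

Lemma ExP_ext F X Y : (forall w, X w = Y w) -> ExP F X = ExP F Y.
Proof. by move=> h; congr ExP; apply: funext. Qed.

Lemma ExPD F X Y : ExP F (fun w => X w + Y w) = ExP F X + ExP F Y.
Proof.
elim: F X Y => [|e F IH] X Y /=; first by rewrite polyCD.
rewrite IH IH; ring.
Qed.

Lemma ExPZ F c X : ExP F (fun w => c * X w) = c%:P * ExP F X.
Proof.
elim: F X => [|e F IH] X /=; first by rewrite polyCM.
rewrite IH IH; ring.
Qed.

Lemma ExPN F X : ExP F (fun w => - X w) = - ExP F X.
Proof.
have -> : ExP F (fun w => - X w) = ExP F (fun w => (-1) * X w).
  by apply: ExP_ext => w; rewrite mulN1r.
by rewrite ExPZ polyCN mulN1r.
Qed.

Lemma ExPB F X Y : ExP F (fun w => X w - Y w) = ExP F X - ExP F Y.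
Proof. by rewrite ExPD ExPN. Qed.

Lemma ExP_cst F c : ExP F (fun _ => c) = c%:P.
Proof. elim: F => [|e F IH] //=; rewrite IH; ring. Qed.

Lemma Ex_ext r F X Y : (forall w, X w = Y w) -> Ex r F X = Ex r F Y.
Proof. by move=> h; rewrite /Ex (ExP_ext _ h). Qed.

Lemma ExD r F X Y : Ex r F (fun w => X w + Y w) = Ex r F X + Ex r F Y.
Proof. by rewrite /Ex ExPD hornerD. Qed.

Lemma ExZ r F c X : Ex r F (fun w => c * X w) = c * Ex r F X.
Proof. by rewrite /Ex ExPZ hornerM hornerC. Qed.

Lemma ExB r F X Y : Ex r F (fun w => X w - Y w) = Ex r F X - Ex r F Y.
Proof. by rewrite /Ex ExPB hornerD hornerN. Qed.

Lemma Ex_cst r F c : Ex r F (fun _ => c) = c.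
Proof. by rewrite /Ex ExP_cst hornerC. Qed.

Lemma Ex_sum r F (I : Type) (s : seq I) (f : I -> (E -> bool) -> R) :
  Ex r F (fun w => \sum_(i <- s) f i w) = \sum_(i <- s) Ex r F (f i).
Proof.
elim: s => [|i s IH]; first by rewrite big_nil (Ex_ext _ _ (fun w => big_nil _ _ _ _)) Ex_cst.
rewrite big_cons -IH -ExD; apply: Ex_ext => w; by rewrite big_cons.
Qed.

Lemma Ex_ge0 r F X : 0 <= r <= 1 -> (forall w, 0 <= X w) -> 0 <= Ex r F X.
Proof.
move=> /andP[r0 r1]; elim: F X => [|e F IH] X hX; first by rewrite Ex_nil.
rewrite Ex_cons addr_ge0 // mulr_ge0 ?IH ?subr_ge0 //.
Qed.

Lemma Ex_le r F X Y : 0 <= r <= 1 -> (forall w, X w <= Y w) -> Ex r F X <= Ex r F Y.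
Proof.
move=> hr h; rewrite -subr_ge0 -ExB; apply: Ex_ge0 => // w; by rewrite subr_ge0.
Qed.

Definition dep (D : E -> Prop) (X : (E -> bool) -> R) :=
  forall w w', (forall e, D e -> w e = w' e) -> X w = X w'.

Lemma dep_upd D X e b : dep D X -> dep D (fun w => X (upd w e b)).
Proof.
move=> dX w w' h; apply: dX => z Dz; rewrite /upd; case: eqP => // _; exact: h.
Qed.

Lemma dep_out D X e b w : dep D X -> ~ D e -> X (upd w e b) = X w.
Proof.
move=> dX nD; apply: dX => z Dz; rewrite /upd; case: eqP => // ze.
by case: nD; rewrite -ze.
Qed.

Lemma Ex_indep r F D1 D2 X Y : dep D1 X -> dep D2 Y ->
  (forall e, D1 e -> D2 e -> False) ->
  Ex r F (fun w => X w * Y w) = Ex r F X * Ex r F Y.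
Proof.
move=> + + disj; elim: F X Y => [|e F IH] X Y dX dY; first by rewrite !Ex_nil.
rewrite !Ex_cons.
have [D1e|nD1e] := pselect (D1 e).
  have nD2 : ~ D2 e by move=> /(disj _ D1e).
  have eY b : Ex r F (fun w => Y (upd w e b)) = Ex r F Y.
    by apply: Ex_ext => w; rewrite (dep_out _ _ dY nD2).
  have eXY b : Ex r F (fun w => X (upd w e b) * Y (upd w e b)) =
               Ex r F (fun w => X (upd w e b) * Y w).
    by apply: Ex_ext => w; rewrite (dep_out _ _ dY nD2).
  rewrite !eXY !eY !IH //; try exact: dep_upd; ring.
have eX b : Ex r F (fun w => X (upd w e b)) = Ex r F X.
  by apply: Ex_ext => w; rewrite (dep_out _ _ dX nD1e).
have eXY b : Ex r F (fun w => X (upd w e b) * Y (upd w e b)) =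
             Ex r F (fun w => X w * Y (upd w e b)).
  by apply: Ex_ext => w; rewrite (dep_out _ _ dX nD1e).
rewrite !eXY !eX !IH //; try exact: dep_upd; ring.
Qed.

Definition Dd e (X : (E -> bool) -> R) := fun w => X (upd w e true) - X (upd w e false).

Lemma russo F X : uniq F ->
  (ExP F X)^`() = \sum_(e <- F) ExP F (Dd e X).
Proof.
elim: F X => [|e F IH] X /=; first by rewrite derivC big_nil.
move=> /andP[eF uF].
rewrite big_cons derivD !derivM derivB derivX derivC !IH //.
have -> : ExP F (fun w => Dd e X (upd w e true)) = ExP F (fun w => X (upd w e true) - X (upd w e false)).
  by apply: ExP_ext => w; rewrite /Dd !upd_same.
have -> : ExP F (fun w => Dd e X (upd w e false)) = ExP F (fun w => X (upd w e true) - X (upd w e false)).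
  by apply: ExP_ext => w; rewrite /Dd !upd_same.
rewrite ExPB.
have -> : \sum_(j <- F) ('X * ExP F (fun w => Dd j X (upd w e true)) +
      (1 - 'X) * ExP F (fun w => Dd j X (upd w e false))) =
   'X * \sum_(j <- F) ExP F (Dd j (fun w => X (upd w e true))) +
   (1 - 'X) * \sum_(j <- F) ExP F (Dd j (fun w => X (upd w e false))).
  rewrite !mulr_sumr -big_split /=; apply: eq_big_seq => j jF.
  have ej : e != j by apply: contraNneq eF => ->.
  by congr (_ * _ + _ * _); apply: ExP_ext => w; rewrite /Dd !(upd_comm _ _ _ ej).
ring.
Qed.

Definition incr (X : (E -> bool) -> R) :=
  forall w w' : E -> bool, (forall e, w e -> w' e) -> X w <= X w'.

Lemma Dd_ge0 e X w : incr X -> 0 <= Dd e X w.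
Proof.
move=> hX; rewrite /Dd subr_ge0; apply: hX => z; rewrite /upd; by case: eqP.
Qed.

Lemma Ex_mono F X r r' : uniq F -> incr X -> 0 <= r -> r <= r' -> r' <= 1 ->
  Ex r F X <= Ex r' F X.
Proof.
move=> uF hX r0 rr' r'1; rewrite /Ex.
apply: (@ler_hornerW _ 0 1) => //; rewrite ?in_itv /=.
- move=> y; rewrite in_itv /= => /andP[y0 y1].
  rewrite russo // horner_sum sumr_ge0 // => e _.
  apply: Ex_ge0; first by rewrite !ltW.
  by move=> w; apply: Dd_ge0.
- by rewrite r0 (le_trans rr').
- by rewrite r'1 (le_trans r0).
Qed.

Lemma Ex_deriv F X r : uniq F -> incr X -> 0 <= r <= 1 ->
  (ExP F X)^`().[r] = \sum_(e <- F) Ex r F (Dd e X).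
Proof. by move=> uF hX hr; rewrite russo // horner_sum. Qed.

End ExDef.

Section Meas.
Variables (R : realType) (E : choiceType).

Definition ind (A : set (E -> bool)) (w : E -> bool) : R := if `[< A w >] then 1 else 0.
Definition detF (F : seq E) (A : set (E -> bool)) :=
  forall w w', (forall e, e \in F -> w e = w' e) -> A w -> A w'.

Lemma cyl_meas e : measurable ([set w | w e = true] : set (Omega E)).
Proof. by apply: sub_sigma_algebra; exists e. Qed.

Lemma detF_upd F e b (A : set (E -> bool)) : detF (e :: F) A ->
  detF F [set w | A (upd w e b)].
Proof.
move=> hA w w' h; apply: hA => z; rewrite in_cons /upd; case: eqP => //= _; exact: h.
Qed.

Lemma meas_det F (A : set (Omega E)) : detF F A -> measurable A.
Proof.
elim: F A => [|e F IH] A hA.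
  have [Aw0|nA] := pselect (A (@w0 E)).
    have -> : A = setT by apply/seteqP; split => // w _; exact: (hA (@w0 E)).
    exact: measurableT.
  have -> : A = set0.
    by apply/seteqP; split => // w Aw; apply: nA; exact: (hA w).
  exact: measurable0.
have -> : A = ([set w | A (upd w e true)] `&` [set w | w e = true]) `|`
              ([set w | A (upd w e false)] `&` ~` [set w | w e = true]).
  apply/seteqP; split => w /=.
    case: (boolP (w e)) => we Aw; [left|right].
      by split => //; rewrite -we upd_id.
    split; first by rewrite -(negbTE we) upd_id.
    by [].
  case => [[h we]|[h we]]; first by rewrite -(upd_id w e) we.
  have we' : w e = false by apply/negbTE/negP.
  by rewrite -(upd_id w e) we'.
apply: measurableU; apply: measurableI.
- by apply: IH; apply: detF_upd.
- exact: cyl_meas.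
- by apply: IH; apply: detF_upd.
- by apply: measurableC; exact: cyl_meas.
Qed.

Definition cyl (G : seq E) (a : E -> bool) : set (E -> bool) :=
  [set w | forall e, e \in G -> w e = a e].

Lemma detF_cyl G a : detF G (cyl G a).
Proof. by move=> w w' h hw e eG; rewrite -h // hw. Qed.

Lemma P_Ex_gen (P : probability (Omega E) R) p : bernoulli_percolation p P ->
  forall F (A : set (E -> bool)) G a, uniq (F ++ G) -> detF F A ->
  P (A `&` cyl G a) = (Ex p F (ind A) * \prod_(e <- G) (if a e then p else 1 - p))%:E.
Proof.
move=> HP; elim => [|e F IH] A G a uFG hA.
  rewrite Ex_nil /ind.
  have [Aw0|nA] := pselect (A (@w0 E)).
    have -> : A = setT by apply/seteqP; split => // w _; exact: (hA (@w0 E)).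
    by rewrite setTI asboolT // mul1r HP.
  have -> : A = set0.
    by apply/seteqP; split => // w Aw; apply: nA; exact: (hA w).
  by rewrite set0I measure0 asboolF // mul0r.
have eG : e \notin G.
  by move: uFG; rewrite cat_cons /= mem_cat negb_or => /andP[/andP[]].
have uFeG : uniq (F ++ e :: G).
  by rewrite -cat1s uniq_catCA.
have hsplit : A `&` cyl G a =
   ([set w | A (upd w e true)] `&` cyl (e :: G) (upd a e true)) `|`
   ([set w | A (upd w e false)] `&` cyl (e :: G) (upd a e false)).
  apply/seteqP; split => w /=.
    move=> [Aw Cw].
    have hC b : w e = b -> cyl (e :: G) (upd a e b) w.
      move=> we z; rewrite in_cons /upd; case: eqP => [->|_] //= zG; exact: Cw.
    case: (boolP (w e)) => we; [left|right].
      by split; [rewrite -we upd_id | exact: hC].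
    by split; [rewrite -(negbTE we) upd_id | apply: hC; exact: negbTE].
  have hC b : cyl (e :: G) (upd a e b) w -> w e = b /\ cyl G a w.
    move=> Cw; split; first by rewrite (Cw e) ?mem_head // /upd eqxx.
    move=> z zG; rewrite (Cw z) ?in_cons ?zG ?orbT // /upd.
    by case: eqP => // ze; move: eG; rewrite -ze zG.
  case => [[h /hC[we Cw]]|[h /hC[we Cw]]]; by split => //; rewrite -(upd_id w e) we.
have hprod b : \prod_(z <- e :: G) (if upd a e b z then p else 1 - p) =
   (if b then p else 1 - p) * \prod_(z <- G) (if a z then p else 1 - p).
  rewrite big_cons /upd eqxx; congr (_ * _); apply: eq_big_seq => z zG.
  by case: eqP => // ze; move: eG; rewrite -ze zG.
rewrite hsplit measureU /=.
- rewrite !IH //; try by apply: detF_upd.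
  rewrite !hprod -EFinD Ex_cons; congr EFin; rewrite /ind /=; ring.
- apply: measurableI; first by apply: (@meas_det F); apply: detF_upd.
  by apply: (@meas_det (e :: G)); exact: detF_cyl.
- apply: measurableI; first by apply: (@meas_det F); apply: detF_upd.
  by apply: (@meas_det (e :: G)); exact: detF_cyl.
- apply/seteqP; split => // w /= [[_ C1] [_ C0]].
  by move: (C1 e (mem_head _ _)) (C0 e (mem_head _ _)); rewrite /upd eqxx => ->.
Qed.

Lemma P_Ex (P : probability (Omega E) R) p : bernoulli_percolation p P ->
  forall F (A : set (E -> bool)), uniq F -> detF F A -> P A = (Ex p F (ind A))%:E.
Proof.
move=> HP F A uF hA.
have := @P_Ex_gen P p HP F A [::] (@w0 E); rewrite cats0 => /(_ uF hA).
have -> : cyl [::] (@w0 E) = setT by apply/seteqP; split => w //= _ e; rewrite in_nil.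
by rewrite setIT big_nil mulr1.
Qed.

End Meas.

Section Reach.
Variables (V E : choiceType) (src tgt : E -> V).

Lemma reach_mono (okE okE' : E -> Prop) (okV okV' : V -> Prop) u v :
  (forall e, okE e -> okE' e) -> (forall z, okV z -> okV' z) ->
  reach src tgt okE okV u v -> reach src tgt okE' okV' u v.
Proof.
move=> hE hV h; elim: h => [a b [ha [hb [e [he hl]]]]|a|a b c _ IH1 _ IH2].
- apply: rt_step; split; first exact: hV.
  split; first exact: hV.
  by exists e; split => //; exact: hE.
- exact: rt_refl.
- exact: rt_trans IH1 IH2.
Qed.

Lemma reach_step (okE : E -> Prop) (okV : V -> Prop) e u w :
  okV u -> okV w -> okE e -> links src tgt e u w -> reach src tgt okE okV u w.
Proof. by move=> *; apply: rt_step; split => //; split => //; exists e; split. Qed.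

Lemma reach_refl (okE : E -> Prop) (okV : V -> Prop) u : reach src tgt okE okV u u.
Proof. exact: rt_refl. Qed.

Lemma reach_trans (okE : E -> Prop) (okV : V -> Prop) u v w :
  reach src tgt okE okV u v -> reach src tgt okE okV v w -> reach src tgt okE okV u w.
Proof. exact: rt_trans. Qed.

Lemma reach_ind1n (okE : E -> Prop) (okV : V -> Prop) (Pr : V -> Prop) v :
  Pr v ->
  (forall u w e, okV u -> okV w -> okE e -> links src tgt e u w ->
     reach src tgt okE okV w v -> Pr w -> Pr u) ->
  forall u, reach src tgt okE okV u v -> Pr u.
Proof.
move=> h0 hS u h; apply clos_rt_rt1n in h; move: h0.
induction h as [|a b c hab hbc IH]; first by [].
move=> h0; case: hab => ha [hb [e [he hl]]].
apply: (hS a b e) => //; first exact: clos_rt1n_rt.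
exact: IH.
Qed.

Lemma links_cases e u w : links src tgt e u w ->
  (src e = u /\ tgt e = w) \/ (src e = w /\ tgt e = u).
Proof. by []. Qed.

Lemma links_sym e u w : links src tgt e u w -> links src tgt e w u.
Proof. by case=> [[]|[]]; [right|left]. Qed.

End Reach.

Section DCT.
Variables (R : realType) (V E : choiceType) (src tgt : E -> V) (x : V)
  (Lam : set V) (Lseq : seq V) (Fq : seq E).
Hypotheses (hx : Lam x) (hL : uniq Lseq) (hLam : forall v, Lam v <-> v \in Lseq)
  (hFq : uniq Fq) (hF : forall e, (Lam (src e) \/ Lam (tgt e)) <-> e \in Fq).

Definition okF (w : E -> bool) e := w e = true /\ e \in Fq.
Definition con w := reach src tgt (okF w) (fun _ => True).
Definition Cout w z := exists y, ~ Lam y /\ con w z y.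
Definition Sg w z := Lam z /\ ~ Cout w z.
Definition Int (S : set V) e := S (src e) /\ S (tgt e).
Definition Bd (S : set V) e := (S (src e) /\ ~ S (tgt e)) \/ (~ S (src e) /\ S (tgt e)).
Definition conS (S : set V) (w : E -> bool) :=
  reach src tgt (fun e => w e = true /\ Int S e) (fun _ => True).
Definition Y S e : set (E -> bool) := [set w | conS S w x (src e) \/ conS S w x (tgt e)].
Definition CX : set (E -> bool) := [set w | Cout w x].
Definition indP (Q : Prop) : R := if `[< Q >] then 1 else 0.

Lemma indP_ge0 Q : 0 <= indP Q.
Proof. by rewrite /indP; case: asboolP. Qed.

Lemma ind_ge0 (A : set (E -> bool)) w : 0 <= ind R A w.
Proof. by rewrite /ind; case: asboolP. Qed.

Lemma con_mono (w w' : E -> bool) u v : (forall e, w e -> w' e) -> con w u v -> con w' u v.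
Proof.
by move=> h; apply: reach_mono => // e [we eF]; split => //; apply: h; rewrite we.
Qed.

Lemma Cout_mono (w w' : E -> bool) z : (forall e, w e -> w' e) -> Cout w z -> Cout w' z.
Proof. by move=> h [y [ny c]]; exists y; split => //; exact: con_mono c. Qed.

Lemma upd_ge (w : E -> bool) e e' : w e' -> upd w e true e'.
Proof. by rewrite /upd; case: eqP. Qed.

Lemma upd_le (w : E -> bool) e e' : upd w e false e' -> w e'.
Proof. by rewrite /upd; case: eqP. Qed.

Lemma not_int S e u t : links src tgt e u t -> ~ S t -> ~ Int S e.
Proof. by case=> [[hs ht]|[hs ht]] nt [s1 s2]; apply: nt; [rewrite -ht|rewrite -hs]. Qed.

Lemma inFq e u t : links src tgt e u t -> Lam u -> e \in Fq.
Proof. by move=> hl Lu; apply/hF; case: hl => [[hs _]|[_ ht]]; [left; rewrite hs|right; rewrite ht]. Qed.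

Lemma conS_in S w u v : S u -> conS S w u v -> S v.
Proof.
move=> Su h; apply clos_rt_rtn1 in h; elim: h => // a b [_ [_ [e [[_ [s1 s2]] hl]]]] _ _.
by case: hl => [[hs ht]|[hs ht]]; [rewrite -ht|rewrite -hs].
Qed.

Lemma piv_lb w e : ~ Cout w x -> Bd (Sg w) e -> Y (Sg w) e w -> Cout (upd w e true) x.
Proof.
move=> nC hB hY; set S := Sg w.
have xS : S x by split.
have key : forall t z, S t -> ~ S z -> links src tgt e t z -> conS S w x t ->
    Cout (upd w e true) x.
  move=> t z St nSz hl hc.
  have ht : con (upd w e true) x t.
    apply: reach_mono hc => // e' [we' [s1 s2]]; split; first exact: upd_ge.
    by apply/hF; left; case: s1.
  have eF : e \in Fq by apply: inFq hl St.1.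
  have hz : con (upd w e true) x z.
    apply: reach_trans ht _; apply: reach_step hl => //.
    by split => //; rewrite /upd eqxx.
  have [Lz|nLz] := pselect (Lam z); last by exists z.
  have [y [ny cy]] : Cout w z.
    by apply: contrapT => nCz; apply: nSz; split.
  exists y; split => //; apply: reach_trans hz _; apply: con_mono cy; exact: upd_ge.
case: hY => hc.
  have Ss := conS_in xS hc.
  have nSt : ~ S (tgt e) by case: hB => [[]|[]].
  by apply: (key _ _ Ss nSt) => //; left.
have St := conS_in xS hc.
have nSs : ~ S (src e) by case: hB => [[]|[]].
by apply: (key _ _ St nSs) => //; right.
Qed.

Lemma Sg_stable w w' S : Sg w = S -> (forall e, ~ Int S e -> w e = w' e) -> Sg w' = S.
Proof.
move=> hS h; subst S; apply/seteqP; split => z.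
  move=> [Lz nC']; apply: contrapT => nSz.
  have [y [ny cy]] : Cout w z by apply: contrapT => nCz; apply: nSz; split.
  apply: nC'; move: z cy {Lz nSz}.
  apply: (@reach_ind1n _ _ _ _ _ _ (fun u => Cout w' u)).
    by exists y; split => //; exact: reach_refl.
  move=> u t e _ _ [we eF] hl cty [y' [ny' cy']].
  have nSt : ~ Sg w t by move=> [_]; apply; exists y.
  have we' : w' e = true by rewrite -h //; exact: not_int hl nSt.
  exists y'; split => //; apply: reach_trans cy'; exact: reach_step hl.
move=> [Lz nC]; split => //; move=> [y [ny cy]].
have : Sg w z -> exists e u t, okF w' e /\ links src tgt e u t /\ Sg w u /\ ~ Sg w t.
  move: z cy {Lz nC}.
  apply: (@reach_ind1n _ _ _ _ _ _
     (fun u => Sg w u -> exists e u0 t, okF w' e /\ links src tgt e u0 t /\ Sg w u0 /\ ~ Sg w t)).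
    by move=> [].
  move=> u t e _ _ he hl _ IH Su.
  have [St|nSt] := pselect (Sg w t); first exact: IH.
  by exists e, u, t.
case=> [|e [u [t [[we' eF] [hl [[Lu nCu] nSt]]]]]]; first by split.
have we : w e = true by rewrite h //; exact: not_int hl nSt.
apply: nCu.
have [Lt|nLt] := pselect (Lam t).
  have [y' [ny' cy']] : Cout w t by apply: contrapT => nCt; apply: nSt; split.
  exists y'; split => //; apply: reach_trans cy'; exact: reach_step hl.
by exists t; split => //; exact: reach_step hl.
Qed.

Definition Xs S : set (E -> bool) := [set w | Sg w = S /\ ~ Cout w x].

Lemma dep_Xs S : dep (fun e => ~ Int S e) (ind R (Xs S)).
Proof.
have H : forall w w', (forall e, ~ Int S e -> w e = w' e) -> Xs S w -> Xs S w'.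
  move=> w w' h [hS hC]; have hS' := Sg_stable hS h; split => //.
  have : Sg w x by split.
  by rewrite hS -hS' => -[].
move=> w w' h; rewrite /ind; congr (if _ then _ else _); apply: asbool_equiv_eq.
by split; apply: H => // e /h ->.
Qed.

Lemma dep_Y S e : dep (Int S) (ind R (Y S e)).
Proof.
have H : forall (w w' : E -> bool), (forall e, Int S e -> w e = w' e) -> Y S e w -> Y S e w'.
  move=> w w' h hY.
  have M u v : conS S w u v -> conS S w' u v.
    by apply: reach_mono => // e' [we' hi]; split => //; rewrite -h.
  by case: hY => hc; [left|right]; exact: M.
move=> w w' h; rewrite /ind; congr (if _ then _ else _); apply: asbool_equiv_eq.
by split; apply: H => // e' /h ->.
Qed.

Lemma incr_ind (A : set (E -> bool)) :
  (forall w w' : E -> bool, (forall e, w e -> w' e) -> A w -> A w') -> incr (ind R A).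
Proof.
move=> h w w' hw; rewrite /ind; case: asboolP => a; case: asboolP => a' //.
by case: a'; exact: h a.
Qed.

Lemma incr_CX : incr (ind R CX).
Proof. by apply: incr_ind => w w' h; exact: Cout_mono. Qed.

Lemma incr_Y S e : incr (ind R (Y S e)).
Proof.
apply: incr_ind => w w' h [hc|hc]; [left|right]; apply: reach_mono hc => // e' [we hi];
by split => //; apply: h; rewrite we.
Qed.

Definition Sb (b : {ffun 'I_(size Lseq) -> bool}) : set V :=
  [set v | exists i : 'I_(size Lseq), b i /\ nth x Lseq i = v].

Lemma Sb_sub b : Sb b `<=` Lam.
Proof. by move=> v [i [_ <-]]; apply/hLam; exact: mem_nth. Qed.

Lemma Sb_inj b b' : Sb b = Sb b' -> b = b'.
Proof.
have H : forall b b', Sb b = Sb b' -> forall i, b i -> b' i.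
  move=> c c' hc i ci.
  have : Sb c (nth x Lseq i) by exists i.
  rewrite hc => -[j [cj hj]].
  have : (nth x Lseq j == nth x Lseq i) by rewrite hj.
  rewrite nth_uniq // => /eqP ji.
  by rewrite -(ord_inj ji).
move=> hb; apply/ffunP => i; apply/idP/idP; apply: H => //.
Qed.

Definition bw w := [ffun i : 'I_(size Lseq) => `[< Sg w (nth x Lseq i) >]].

Lemma Sb_bw w : Sb (bw w) = Sg w.
Proof.
apply/seteqP; split => v.
  by move=> [i [+ <-]]; rewrite ffunE => /asboolP.
move=> Sv; have vL : v \in Lseq by apply/hLam; exact: Sv.1.
have iL : (index v Lseq < size Lseq)%N by rewrite index_mem.
exists (Ordinal iL) => /=.
rewrite ffunE nth_index //; split => //; exact/asboolP.
Qed.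

Lemma sum_Xs w : \sum_(b : {ffun 'I_(size Lseq) -> bool}) ind R (Xs (Sb b)) w =
  ind R [set w | ~ Cout w x] w.
Proof.
rewrite (bigD1 (bw w)) //= big1 ?addr0.
  rewrite Sb_bw /ind; congr (if _ then _ else _); apply: asbool_equiv_eq.
  by split => [[]|] //.
move=> b nb; rewrite /ind asboolF // => -[hS _].
by move/eqP: nb; apply; apply: Sb_inj; rewrite Sb_bw hS.
Qed.

Definition Piv e : set (E -> bool) := [set w | ~ Cout w x /\ Cout (upd w e true) x].

Lemma sum_piv w e :
  \sum_(b : {ffun 'I_(size Lseq) -> bool})
     indP (Bd (Sb b) e) * (ind R (Xs (Sb b)) w * ind R (Y (Sb b) e) w)
  <= ind R (Piv e) w.
Proof.
rewrite (bigD1 (bw w)) //= big1 ?addr0.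
  rewrite Sb_bw /ind /indP.
  case: (asboolP (Bd _ e)) => hb; last by rewrite mul0r; case: asboolP.
  case: (asboolP (Xs _ w)) => hX; last by rewrite mul0r mulr0; case: asboolP.
  case: (asboolP (Y _ e w)) => hy; last by rewrite !mulr0; case: asboolP.
  rewrite asboolT ?mulr1 //; split; first exact: hX.2.
  by apply: piv_lb => //; exact: hX.2.
move=> b nb; rewrite [ind R (Xs _) w]/ind asboolF ?mul0r ?mulr0 // => -[hS _].
by move/eqP: nb; apply; apply: Sb_inj; rewrite Sb_bw hS.
Qed.

Definition theta r := Ex r Fq (ind R CX).
Definition psi r S := \sum_(e <- Fq) indP (Bd S e) * Ex r Fq (ind R (Y S e)).

Lemma Dd_piv e w : ind R (Piv e) w <= Dd e (ind R CX) w.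
Proof.
rewrite {1}/ind; case: asboolP => [[nC C1]|_]; last exact: Dd_ge0 incr_CX.
rewrite /Dd /ind asboolT // asboolF ?subr0 //.
by move=> h; apply: nC; apply: Cout_mono h => e'; exact: upd_le.
Qed.

Lemma psi_mono p r S : 0 <= p -> p <= r -> r <= 1 -> psi p S <= psi r S.
Proof.
move=> p0 pr r1; apply: ler_sum => e _; apply: ler_wpM2l; first exact: indP_ge0.
by apply: Ex_mono => //; exact: incr_Y.
Qed.

Lemma deriv_lb p r (d : R) : 0 <= p -> p <= r -> r <= 1 -> 0 <= d ->
  (forall S, S `<=` Lam -> S x -> d <= psi p S) ->
  d * (1 - theta r) <= (ExP Fq (ind R CX))^`().[r].
Proof.
move=> p0 pr r1 d0 Hd.
have r0 : 0 <= r by exact: le_trans pr.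
have hr : 0 <= r <= 1 by rewrite r0 r1.
rewrite Ex_deriv //; last exact: incr_CX.
apply: le_trans (_ : \sum_(e <- Fq) Ex r Fq (ind R (Piv e)) <= _); last first.
  by apply: ler_sum => e _; apply: Ex_le => // w; exact: Dd_piv.
apply: le_trans (_ : \sum_(e <- Fq) Ex r Fq (fun w => \sum_(b : {ffun 'I_(size Lseq) -> bool})
     indP (Bd (Sb b) e) * (ind R (Xs (Sb b)) w * ind R (Y (Sb b) e) w)) <= _); last first.
  by apply: ler_sum => e _; apply: Ex_le => // w; exact: sum_piv.
under eq_bigr do rewrite Ex_sum.
have hI : forall b e, Ex r Fq (fun w => ind R (Xs (Sb b)) w * ind R (Y (Sb b) e) w) =
    Ex r Fq (ind R (Xs (Sb b))) * Ex r Fq (ind R (Y (Sb b) e)).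
  move=> b e; apply: (@Ex_indep _ _ _ _ (fun e => ~ Int (Sb b) e) (Int (Sb b))).
  - exact: dep_Xs.
  - exact: dep_Y.
  - by move=> ? ?.
under eq_bigr do under eq_bigr do rewrite ExZ hI.
rewrite exchange_big /=.
apply: le_trans (_ : \sum_(b : {ffun 'I_(size Lseq) -> bool})
   Ex r Fq (ind R (Xs (Sb b))) * d <= _).
  rewrite -mulr_suml -Ex_sum (Ex_ext _ _ sum_Xs) mulrC.
  rewrite /theta -(Ex_cst r Fq 1) -ExB; apply: ler_wpM2r => //.
  by apply: Ex_le => // w; rewrite /ind; case: asboolP => a; case: asboolP => b //; rewrite ?subrr ?subr0 //.
apply: ler_sum => b _.
have -> : \sum_(e <- Fq) indP (Bd (Sb b) e) *
      (Ex r Fq (ind R (Xs (Sb b))) * Ex r Fq (ind R (Y (Sb b) e))) =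
    Ex r Fq (ind R (Xs (Sb b))) * psi r (Sb b).
  by rewrite /psi mulr_sumr; apply: eq_bigr => e _; rewrite mulrCA.
have [xS|nxS] := pselect (Sb b x).
  apply: ler_wpM2l; first by apply: Ex_ge0 => // w; exact: ind_ge0.
  by apply: le_trans (Hd _ (@Sb_sub b) xS) (psi_mono _ p0 pr r1).
have -> : Ex r Fq (ind R (Xs (Sb b))) = 0.
  rewrite -(Ex_cst r Fq 0); apply: Ex_ext => w; rewrite /ind asboolF // => -[hS hC].
  by apply: nxS; rewrite -hS; split.
by rewrite !mul0r.
Qed.

End DCT.

Section DCT2.
Variables (R : realType) (V E : choiceType) (src tgt : E -> V) (x : V)
  (Lam : set V) (Lseq : seq V) (Fq : seq E).
Hypotheses (hx : Lam x) (hL : uniq Lseq) (hLam : forall v, Lam v <-> v \in Lseq)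
  (hFq : uniq Fq) (hF : forall e, (Lam (src e) \/ Lam (tgt e)) <-> e \in Fq).

Lemma dct_bound p q (d : R) : 0 <= p -> p < q -> q <= 1 -> 0 < d ->
  (forall S, S `<=` Lam -> S x -> d <= psi src tgt x Fq p S) ->
  Num.min (2^-1) (d * (q - p) / 2) <= theta src tgt x Lam Fq q.
Proof.
move=> p0 pq q1 d0 Hd.
have [[r [pr [rq hr]]]|nex] := pselect (exists r, p <= r /\ r <= q /\ 2^-1 <= theta src tgt x Lam Fq r).
  rewrite ge_min; apply/orP; left; apply: le_trans hr _.
  apply: Ex_mono => //; first apply: incr_CX.
  exact: le_trans pr.
pose g := ExP Fq (ind R (CX src tgt x Lam Fq)) - (d / 2)%:P * 'X.
have hg : g.[p] <= g.[q].
  apply: (@ler_hornerW _ p q); rewrite ?in_itv /= ?lexx ?ltW //.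
  move=> y; rewrite in_itv /= => /andP[py yq].
  rewrite /g derivB derivM derivC derivX mul0r add0r mulr1 hornerD hornerN hornerC subr_ge0.
  have hy : theta src tgt x Lam Fq y < 2^-1.
    rewrite ltNge; apply/negP => h; apply: nex; exists y; split; [exact: ltW|split => //; exact: ltW].
  apply: le_trans (deriv_lb hx hL hLam hFq hF p0 (ltW py) (le_trans (ltW yq) q1) (ltW d0) Hd).
  rewrite -subr_ge0.
  have : 0 <= d * (2^-1 - theta src tgt x Lam Fq y) by rewrite mulr_ge0 ?subr_ge0 ?ltW.
  by have -> : d * (1 - theta src tgt x Lam Fq y) - d / 2 = d * (2^-1 - theta src tgt x Lam Fq y) by field.
move: hg; rewrite /g !hornerE -/(theta src tgt x Lam Fq p) -/(theta src tgt x Lam Fq q) => hg.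
have t0 : 0 <= theta src tgt x Lam Fq p.
  apply: Ex_ge0; first by rewrite p0 (le_trans (ltW pq)).
  by move=> w; exact: ind_ge0.
rewrite ge_min; apply/orP; right.
have -> : d * (q - p) / 2 = d / 2 * q - d / 2 * p by field.
move: t0; rewrite /theta /Ex => t0; lra.
Qed.

End DCT2.

Section Balls.
Variables (V E : choiceType) (src tgt : E -> V).
Hypothesis lf : locally_finite src tgt.

Lemma walk_mono n u v : walk_le src tgt n u v -> walk_le src tgt n.+1 u v.
Proof.
elim: n u => [|n IH] u /=; first by move=> ->; left.
case=> [->|[w [e [hl hw]]]]; first by left.
by right; exists w, e; split => //; exact: IH.
Qed.

Lemma walk_monoN m n u v : (m <= n)%N -> walk_le src tgt m u v -> walk_le src tgt n u v.
Proof.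
move=> /subnK <- h; elim: (n - m)%N => [|k IH] //; rewrite ?addSn; exact: walk_mono.
Qed.

Lemma walk_refl n u : walk_le src tgt n u u.
Proof. by case: n => [|n] //=; left. Qed.

Definition nbr u := [set w | exists e, links src tgt e u w].
Definition incE v := [set e | src e = v \/ tgt e = v].

Lemma nbr_fin u : finite_set (nbr u).
Proof.
apply: (@sub_finite_set _ _ ((tgt @` incE u) `|` (src @` incE u))).
  move=> w [e [[hs ht]|[hs ht]]]; [left|right]; exists e => //; by [left|right].
by rewrite finite_setU; split; apply: finite_image; exact: lf.
Qed.

Lemma walk_fin n u : finite_set [set v | walk_le src tgt n u v].
Proof.
elim: n u => [|n IH] u /=.
  by apply: (@sub_finite_set _ _ [set u]) => [v /= ->|]; [|exact: finite_set1].
apply: (@sub_finite_set _ _ ([set u] `|` \bigcup_(w in nbr u) [set v | walk_le src tgt n w v])).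
  move=> v /= [->|[w [e [hl hw]]]]; [by left|right; exists w => //; by exists e].
rewrite finite_setU; split; first exact: finite_set1.
by apply: bigcup_finite; [exact: nbr_fin|move=> w _; exact: IH].
Qed.

Lemma incset_fin (S : set V) : finite_set S -> finite_set [set e | S (src e) \/ S (tgt e)].
Proof.
move=> fS; apply: (@sub_finite_set _ _ (\bigcup_(v in S) incE v)).
  by move=> e [h|h]; [exists (src e) => //; left|exists (tgt e) => //; right].
by apply: bigcup_finite => // v _; exact: lf.
Qed.

End Balls.

Section Theta.
Variables (R : realType) (V E : choiceType) (src tgt : E -> V) (x : V).
Hypothesis lf : locally_finite src tgt.

Definition Ball n := [set y | walk_le src tgt n x y].
Definition FB n := [set e | Ball n (src e) \/ Ball n (tgt e)].
Definition Lq n : seq V := finmap.enum_fset (fset_set (Ball n)).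
Definition Fq n : seq E := finmap.enum_fset (fset_set (FB n)).

Lemma Ball_fin n : finite_set (Ball n).
Proof. exact: walk_fin. Qed.

Lemma FB_fin n : finite_set (FB n).
Proof. by apply: incset_fin => //; exact: Ball_fin. Qed.

Lemma hx n : Ball n x.
Proof. exact: walk_refl. Qed.
Lemma hL n : uniq (Lq n).
Proof. exact: finmap.fset_uniq. Qed.
Lemma hLam n v : Ball n v <-> v \in Lq n.
Proof. by rewrite /Lq in_fset_set ?inE //; exact: Ball_fin. Qed.
Lemma hFq n : uniq (Fq n).
Proof. exact: finmap.fset_uniq. Qed.
Lemma hF n e : (Ball n (src e) \/ Ball n (tgt e)) <-> e \in Fq n.
Proof. by rewrite /Fq in_fset_set ?inE //; exact: FB_fin. Qed.

Definition An n : set (E -> bool) :=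
  [set w | exists y, open_reach_V src tgt w set0 x y /\ ~ walk_le src tgt n x y].

Lemma An_CX n : An n = CX src tgt x (Ball n) (Fq n).
Proof.
apply/seteqP; split => w.
  move=> [y [c ny]].
  suff : Ball n x -> Cout src tgt (Ball n) (Fq n) w x by apply; exact: hx.
  move: x c; apply: (@reach_ind1n _ _ _ _ _ _ (fun u => Ball n u -> Cout src tgt (Ball n) (Fq n) w u)).
    by [].
  move=> u t e _ _ we hl _ IH Bu.
  have eF : e \in Fq n by apply: (inFq (@hF n) hl Bu).
  have [Bt|nBt] := pselect (Ball n t).
    have [y' [ny' cy']] := IH Bt.
    exists y'; split => //; apply: reach_trans cy'; exact: reach_step hl.
  by exists t; split => //; exact: reach_step hl.
move=> [y [ny c]]; exists y; split => //.
by apply: reach_mono c => // e [].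
Qed.

Lemma detF_CX n : detF (Fq n) (CX src tgt x (Ball n) (Fq n)).
Proof.
move=> w w' h [y [ny c]]; exists y; split => //.
by apply: reach_mono c => // e [we eF]; split => //; rewrite -h.
Qed.

Lemma P_An (P : probability (Omega E) R) p : bernoulli_percolation p P ->
  forall n, P (An n) = (theta src tgt x (Ball n) (Fq n) p)%:E.
Proof.
move=> HP n; rewrite An_CX; exact: (P_Ex HP (hFq n) (detF_CX (n:=n))).
Qed.

Lemma An_meas n : measurable (An n : set (Omega E)).
Proof. by rewrite An_CX; apply: meas_det; exact: (detF_CX (n:=n)). Qed.

Lemma conn_inf_An : conn_inf src tgt x = \bigcap_n An n.
Proof. by apply/seteqP; split => w h; [move=> n _; exact: h n | move=> n; exact: h n I]. Qed.

Lemma conn_inf_lb (P : probability (Omega E) R) q (c : R) :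
  bernoulli_percolation q P ->
  (forall n, c <= theta src tgt x (Ball n) (Fq n) q) ->
  (c%:E <= P (conn_inf src tgt x))%E.
Proof.
move=> HP hc.
have cv : (P \o An) @ \oo --> P (\bigcap_n An n).
  apply: nonincreasing_cvg_mu => [| | |m n mn].
  - by rewrite (le_lt_trans (probability_le1 _ (An_meas 0))) // ltry.
  - exact: An_meas.
  - by apply: bigcapT_measurable => n; exact: An_meas.
  - apply/subsetPset => w [y [cy ny]]; exists y; split => //.
    by move=> h; apply: ny; exact: walk_monoN mn h.
rewrite conn_inf_An -(cvg_lim _ cv) //; apply: lime_ge; first exact: cvgP cv.
by apply: nearW => n /=; rewrite (P_An HP) lee_fin.
Qed.

End Theta.

Section Cut.
Variables (R : realType) (V E : choiceType) (src tgt : E -> V) (x : V).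
Hypothesis lf : locally_finite src tgt.
Variables (n : nat) (S : set V).
Hypotheses (SB : S `<=` Ball src tgt x n) (Sx : S x).

Local Notation Fq' := (Fq src tgt x n).
Local Notation BdS := (Bd src tgt S).

Lemma S_fin : finite_set S.
Proof. exact: sub_finite_set SB (Ball_fin x lf n). Qed.

Lemma BdFq e : BdS e -> e \in Fq'.
Proof. by move=> h; apply/(hF x lf n); case: h => [[h _]|[_ h]]; [left|right]; exact: SB. Qed.

Lemma IntFq e : Int src tgt S e -> e \in Fq'.
Proof. by move=> [h _]; apply/(hF x lf n); left; exact: SB. Qed.

Lemma detF_Y e : detF Fq' (Y src tgt x S e).
Proof.
move=> w w' h hY.
have M u v : conS src tgt S w u v -> conS src tgt S w' u v.
  by apply: reach_mono => // e' [we hi]; split => //; rewrite -h // IntFq.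
by case: hY => hc; [left|right]; exact: M.
Qed.

Lemma nbd_step e u t : links src tgt e u t -> ~ BdS e -> S u -> S t.
Proof.
move=> hl nB Su; apply: contrapT => nSt; apply: nB.
by case: hl => [[hs ht]|[hs ht]]; [left|right]; rewrite hs ht.
Qed.

Lemma int_of e u t : links src tgt e u t -> S u -> S t -> Int src tgt S e.
Proof. by case=> [[hs ht]|[hs ht]] Su St; rewrite /Int hs ht. Qed.

Lemma Y_end e u (w : E -> bool) : (src e = u \/ tgt e = u) -> conS src tgt S w x u ->
  Y src tgt x S e w.
Proof. by case=> <- h; [left|right]. Qed.

Lemma end_of e u t : links src tgt e u t -> src e = u \/ tgt e = u.
Proof. by case=> [[hs _]|[_ ht]]; [left|right]. Qed.

Lemma edge_cut : edge_cutset src tgt x BdS.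
Proof.
apply: sub_finite_set S_fin => y h.
suff : S x -> S y by apply.
move: x h; apply: (@reach_ind1n _ _ _ _ _ _ (fun u => S u -> S y)) => // u t e _ _ nB hl _ IH Su.
by apply: IH; exact: nbd_step hl nB Su.
Qed.

Lemma AE_eq e : BdS e ->
  A_E src tgt x e BdS = [set w | w e = true /\ Y src tgt x S e w].
Proof.
move=> hB; apply/seteqP; split => w.
  move=> [we hr]; split => //.
  have PL : forall t, reach src tgt (fun e' => w e' = true /\ ~ (BdS `\ e) e') (fun _ => True) x t ->
      (S t /\ conS src tgt S w x t) \/ Y src tgt x S e w.
    move=> t h.
    have G : forall u, reach src tgt (fun e' => w e' = true /\ ~ (BdS `\ e) e') (fun _ => True) u t ->
        S u -> conS src tgt S w x u -> (S t /\ conS src tgt S w x t) \/ Y src tgt x S e w.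
      apply: (@reach_ind1n _ _ _ _ _ _
        (fun u => S u -> conS src tgt S w x u -> (S t /\ conS src tgt S w x t) \/ Y src tgt x S e w)).
      by move=> St ct; left.
    move=> u t' e' _ _ [we' nB] hl _ IH Su cu.
    have [ee|ne] := pselect (e' = e).
      by right; subst e'; apply: Y_end cu; exact: end_of hl.
    have nB' : ~ BdS e' by move=> hb; apply: nB; split.
    have St' := nbd_step hl nB' Su.
    have hi := int_of hl Su St'.
    apply: IH => //; apply: reach_trans cu _; apply: reach_step hl => //.
  by apply: G h Sx _; exact: reach_refl.
  case: hr => h; case: (PL _ h) => [[_ c]|//].
    exact: (Y_end (or_introl erefl) c).
  exact: (Y_end (or_intror erefl) c).
move=> [we hY]; split => //.
have M u : conS src tgt S w x u ->
    reach src tgt (fun e' => w e' = true /\ ~ (BdS `\ e) e') (fun _ => True) x u.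
  apply: reach_mono => // e' [we' [s1 s2]]; split => // -[[[h1 h2]|[h1 h2]] _] //.
by case: hY => h; [left|right]; exact: M.
Qed.

Lemma Y_meas e : measurable (Y src tgt x S e : set (Omega E)).
Proof. exact: meas_det (detF_Y (e:=e)). Qed.

Lemma P_Y (P : probability (Omega E) R) p : bernoulli_percolation p P -> forall e,
  P (Y src tgt x S e : set (Omega E)) = (Ex p Fq' (ind R (Y src tgt x S e)))%:E.
Proof. move=> HP e; exact: (P_Ex HP (hFq src tgt x n) (detF_Y (e:=e))). Qed.

Lemma Bd_fin : finite_set BdS.
Proof.
apply: (@sub_finite_set _ _ [set` Fq']) => // e /BdFq; exact.
Qed.

Lemma psi_E (P : probability (Omega E) R) p :
  (psi src tgt x Fq' p S)%:E =
  \sum_(e \in [set` Fq']) (indP R (BdS e) * Ex p Fq' (ind R (Y src tgt x S e)))%:E.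
Proof. by rewrite fsumEFin // -fsbig_seq //; exact: hFq. Qed.

Lemma edge_sum (P : probability (Omega E) R) p : 0 <= p <= 1 -> bernoulli_percolation p P ->
  (\esum_(e in BdS) P (A_E src tgt x e BdS : set (Omega E)) <=
   (psi src tgt x Fq' p S)%:E)%E.
Proof.
move=> hp HP; rewrite esum_fset; last 2 first.
- exact: Bd_fin.
- by move=> e _; exact: measure_ge0.
set f := fun e => P (A_E src tgt x e BdS : set (Omega E)).
have -> : (\sum_(e \in BdS) f e = \sum_(e \in [set` Fq']) (if e \in (BdS : set E) then f e else 0))%E.
  by rewrite -fsbig_mkcondr setIidr // => e /BdFq.
rewrite (psi_E P p); apply: lee_fsum => // e _.
case: ifPn => [/set_mem hB|_]; last first.
  rewrite lee_fin mulr_ge0 ?indP_ge0 //; apply: Ex_ge0 => // w; exact: ind_ge0.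
rewrite /indP asboolT // mul1r -(P_Y HP).
apply: le_measure; rewrite ?inE.
- rewrite AE_eq //; apply: measurableI; [exact: cyl_meas|exact: Y_meas].
- exact: Y_meas.
- by rewrite AE_eq // => w [].
Qed.

Definition PiV : set V := [set z | ~ S z /\ exists e t, links src tgt e t z /\ S t].

Lemma PiV_fin : finite_set PiV.
Proof.
apply: (@sub_finite_set _ _ (\bigcup_(t in S) nbr src tgt t)).
  by move=> z [_ [e [t [hl St]]]]; exists t => //; exists e.
by apply: bigcup_finite; [exact: S_fin|move=> t _; exact: nbr_fin].
Qed.

Lemma vertex_cut : vertex_cutset src tgt x PiV.
Proof.
apply: sub_finite_set S_fin => y h.
have G : forall u, reach src tgt (fun _ => True) (fun z => ~ PiV z) u y -> S u -> S y.
  apply: (@reach_ind1n _ _ _ _ _ _ (fun u => S u -> S y)) => // u t e _ nPt _ hl _ IH Su.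
  apply: IH; apply: contrapT => nSt; apply: nPt; split => //; by exists e, u.
exact: G h Sx.
Qed.

Definition oe e := if `[< S (src e) >] then tgt e else src e.
Definition QV z : set (E -> bool) := [set w | exists e, e \in Fq' /\ BdS e /\ z = oe e /\
   w e = true /\ Y src tgt x S e w].

Lemma conS_S (w : E -> bool) u v : conS src tgt S w u v -> S u ->
  reach src tgt (fun e => w e = true /\ Int src tgt S e) S u v.
Proof.
move: u; apply: (@reach_ind1n _ _ _ _ _ _ (fun u => S u -> reach src tgt (fun e => w e = true /\ Int src tgt S e) S u v)).
  by move=> _; exact: reach_refl.
move=> u t e _ _ [we [s1 s2]] hl _ IH Su.
have St : S t by case: hl => [[_ <-]|[<- _]].
by apply: reach_trans (IH St); apply: reach_step hl.
Qed.

Lemma AV_eq z : PiV z -> A_V src tgt x z PiV = QV z.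
Proof.
move=> Pz; have nSz := Pz.1; apply/seteqP; split => w.
  move=> h.
  have G : forall u, reach src tgt (fun e => w e = true) (fun v => ~ (PiV `\ z) v) u z ->
      S u -> conS src tgt S w x u -> QV z w.
    apply: (@reach_ind1n _ _ _ _ _ _ (fun u => S u -> conS src tgt S w x u -> QV z w)).
      by move=> Sz; case: nSz.
    move=> u t e _ okt we hl _ IH Su cu.
    have [tz|ntz] := pselect (t = z).
      subst t; exists e; split; first exact: (inFq (hF x lf n) hl (SB Su)).
      split; first by case: hl => [[hs ht]|[hs ht]]; [left|right]; rewrite hs ht.
      split; first by rewrite /oe; case: hl => [[hs ht]|[hs ht]];
        [rewrite hs (asboolT Su) ht | rewrite hs (asboolF nSz)].
      split => //; exact: Y_end (end_of hl) cu.
    have St : S t.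
      apply: contrapT => nSt; apply: okt; split; last by [].
      by split => //; exists e, u.
    have hi := int_of hl Su St.
    apply: (IH St); apply: reach_trans cu _; apply: reach_step hl => //.
  by apply: G h Sx _; exact: reach_refl.
move=> [e [eF [hB [hz [we hY]]]]].
have M v : conS src tgt S w x v ->
    reach src tgt (fun e => w e = true) (fun v => ~ (PiV `\ z) v) x v.
  move=> c; apply: reach_mono (conS_S c Sx) => [e' []//|v' Sv' [[]]//].
have okz : ~ (PiV `\ z) z by move=> [_ nz]; apply: nz.
have [Ss|nSs] := pselect (S (src e)).
  have nSt : ~ S (tgt e) by case: hB => [[]|[]].
  have hz' : z = tgt e by rewrite hz /oe asboolT.
  have c : conS src tgt S w x (src e).
    by case: hY => // c; case: nSt; exact: conS_in Sx c.
  apply: reach_trans (M _ c) _; apply: (reach_step (e:=e)).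
  - by move=> [[]].
  - exact: okz.
  - exact: we.
  - by left; rewrite hz'.
have St : S (tgt e) by case: hB => [[]|[]].
have hz' : z = src e by rewrite hz /oe asboolF.
have c : conS src tgt S w x (tgt e).
  by case: hY => // c; case: nSs; exact: conS_in Sx c.
apply: reach_trans (M _ c) _; apply: (reach_step (e:=e)).
- by move=> [[]].
- exact: okz.
- exact: we.
- by right; rewrite hz'.
Qed.

Lemma detF_QV z : detF Fq' (QV z).
Proof.
move=> w w' h [e [eF [hB [hz [we hY]]]]]; exists e; do !split => //.
  by rewrite -h.
exact: (detF_Y (e:=e)) h hY.
Qed.

Lemma vertex_sum (P : probability (Omega E) R) p : 0 <= p <= 1 -> bernoulli_percolation p P ->
  (\esum_(z in PiV) P (A_V src tgt x z PiV : set (Omega E)) <=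
   (psi src tgt x Fq' p S)%:E)%E.
Proof.
move=> hp HP; rewrite esum_fset; last 2 first.
- exact: PiV_fin.
- by move=> e _; exact: measure_ge0.
rewrite fsbig_finite; last exact: PiV_fin.
set Zs := finmap.enum_fset (fset_set PiV).
have g0 e : 0 <= Ex p Fq' (ind R (Y src tgt x S e)).
  by apply: Ex_ge0 => // w; exact: ind_ge0.
pose h z : R := \sum_(e <- Fq') indP R (BdS e /\ z = oe e) * Ex p Fq' (ind R (Y src tgt x S e)).
have H1 : (\sum_(z <- Zs) P (A_V src tgt x z PiV : set (Omega E)) <= \sum_(z <- Zs) (h z)%:E)%E.
  rewrite big_seq [X in (_ <= X)%E]big_seq; apply: lee_sum => z zZ.
  have Pz : PiV z by move: zZ; rewrite in_fset_set ?inE //; exact: PiV_fin.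
  rewrite AV_eq // (P_Ex HP (hFq src tgt x n) (detF_QV (z:=z))) lee_fin.
  rewrite /h; under eq_bigr do rewrite -ExZ.
  rewrite -Ex_sum; apply: Ex_le => // w.
  rewrite {1}/ind; case: asboolP => [[e [eF [hB [hz [we hY]]]]]|_]; last first.
    by apply: sumr_ge0 => e _; rewrite mulr_ge0 ?indP_ge0 ?ind_ge0.
  rewrite (big_rem e eF) /= /indP asboolT // /ind asboolT // mul1r lerDl.
  by apply: sumr_ge0 => e' _; rewrite mulr_ge0 ?ind_ge0 // /indP; case: asboolP.
have H2 : (\sum_(z <- Zs) (h z)%:E <= (psi src tgt x Fq' p S)%:E)%E; last first.
  move: (le_trans H1 H2); exact.
rewrite sumEFin lee_fin exchange_big /= /psi; apply: ler_sum => e _.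
rewrite -mulr_suml; apply: ler_wpM2r => //.
have [hB|nB] := pselect (BdS e); last first.
  rewrite big1 ?indP_ge0 // => z _; rewrite /indP asboolF // => -[hb _]; exact: nB hb.
apply: le_trans (_ : \sum_(z <- Zs) ((z == oe e)%:R : R) <= _).
  apply: ler_sum => z _; rewrite /indP; case: asboolP => [[_ ->]|_]; rewrite ?eqxx //.
rewrite /indP asboolT //.
have uZ : uniq Zs by exact: finmap.fset_uniq.
case: (boolP (oe e \in Zs)) => oZ.
  rewrite (big_rem _ oZ) /= eqxx big1_seq ?addr0 // => z /andP[_ zr].
  have : z != oe e by apply: contraTneq zr => ->; rewrite mem_rem_uniqF.
  by move/negbTE => ->.
rewrite big1_seq ?ler01 // => z zZ.
have : z != oe e by apply: contraNneq oZ => <-.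
by move/negbTE => ->.
Qed.

End Cut.

Section Easy.
Variables (R : realType) (V E : choiceType) (src tgt : E -> V) (x : V).
Hypothesis lf : locally_finite src tgt.
Hypothesis conn : connected_graph src tgt.

Lemma conn_meas : measurable (conn_inf src tgt x : set (Omega E)).
Proof.
rewrite conn_inf_An; apply: bigcapT_measurable => n; exact: (An_meas x lf n).
Qed.

Lemma union_bound (T : choiceType) (P : probability (Omega E) R) p :
  0 <= p <= 1 -> bernoulli_percolation p P ->
  forall (Fc : seq E) (Ks : seq T) (B : T -> set (E -> bool)) (A : set (Omega E)),
  uniq Fc -> (forall k, detF Fc (B k)) -> measurable A ->
  A `<=` [set w | exists k, k \in Ks /\ B k w] ->
  (P A <= \sum_(k <- Ks) P (B k : set (Omega E)))%E.
Proof.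
move=> hp HP Fc Ks B A uF hB mA sub.
set U := [set w : E -> bool | exists k, k \in Ks /\ B k w].
have dU : detF Fc U.
  by move=> w w' h [k [kK hk]]; exists k; split => //; exact: hB h hk.
apply: (@le_trans _ _ (P (U : set (Omega E)))).
  by apply: le_measure; rewrite ?inE //; exact: meas_det dU.
rewrite (P_Ex HP uF dU).
have -> : (\sum_(k <- Ks) P (B k : set (Omega E)) = \sum_(k <- Ks) (Ex p Fc (ind R (B k)))%:E)%E.
  by apply: eq_bigr => k _; exact: (P_Ex HP uF (hB k)).
rewrite sumEFin lee_fin -Ex_sum; apply: Ex_le => // w.
rewrite {1}/ind; case: asboolP => [[k [kK hk]]|_]; last first.
  by apply: sumr_ge0 => k _; exact: ind_ge0.
rewrite (big_rem k kK) /= /ind asboolT // lerDl.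
by apply: sumr_ge0 => k' _; exact: ind_ge0.
Qed.

Lemma reach_walk y : exists n, walk_le src tgt n x y.
Proof.
have h := conn x y.
have G : forall u, reach src tgt (fun _ => True) (fun _ => True) u y -> exists n, walk_le src tgt n u y.
  apply: (@reach_ind1n _ _ _ _ _ _ (fun u => exists n, walk_le src tgt n u y)).
    by exists 0%N.
  move=> u t e _ _ _ hl _ [n hn]; exists n.+1; right; by exists t, e.
exact: G h.
Qed.

Lemma C_ball (C : set V) : finite_set C -> exists N, C `<=` Ball src tgt x N.
Proof.
move=> /finite_seqP [s ->]; elim: s => [|y s [N hN]].
  by exists 0%N => y.
have [n hn] := reach_walk y.
exists (maxn N n) => z /=; rewrite in_cons => /orP[/eqP ->|zs].
  by apply: walk_monoN hn; exact: leq_maxr.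
by apply: walk_monoN (hN z zs); exact: leq_maxl.
Qed.

Lemma reach_end (okE : E -> Prop) (okV : V -> Prop) u : reach src tgt okE okV x u -> x = u \/ okV u.
Proof.
move=> h; have := clos_rt_rtn1 _ _ _ _ h; case => [|a b [_ [hb _]] _]; by [left|right].
Qed.

Lemma easy_V (P : probability (Omega E) R) p : 0 <= p <= 1 -> bernoulli_percolation p P ->
  forall Pi, vertex_cutset src tgt x Pi ->
  (P (conn_inf src tgt x : set (Omega E)) <=
   \esum_(v in Pi) P (A_V src tgt x v Pi : set (Omega E)))%E.
Proof.
move=> hp HP Pi hC.
have [xP|nxP] := pselect (Pi x).
  apply: esum_ge; exists [set x].
    by split; [exact: finite_set1|move=> z ->].
  rewrite fsbig_set1.
  have -> : A_V src tgt x x Pi = setT.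
    by apply/seteqP; split => // w _; exact: reach_refl.
  rewrite probability_setT; apply: probability_le1; exact: conn_meas.
set C := [set y | reach src tgt (fun _ => True) (fun z => ~ Pi z) x y].
have nPC u : C u -> ~ Pi u by case/reach_end => [<-|].
set K := Pi `&` \bigcup_(u in C) nbr src tgt u.
have Kfin : finite_set K.
  by apply: finite_setIr; apply: bigcup_finite => // u _; exact: nbr_fin.
set FC := [set e | C (src e) \/ C (tgt e)].
have FCfin : finite_set FC by exact: incset_fin.
set Fc := finmap.enum_fset (fset_set FC).
have FcE e : e \in Fc = `[< FC e >].
  by rewrite /Fc in_fset_set //; apply/idP/idP => [/set_mem/asboolP|/asboolP/mem_set].
set Ks := finmap.enum_fset (fset_set K).
have KsE v : v \in Ks = `[< K v >].
  by rewrite /Ks in_fset_set //; apply/idP/idP => [/set_mem/asboolP|/asboolP/mem_set].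
pose B v : set (E -> bool) :=
  [set w | reach src tgt (fun e => w e = true /\ FC e) (fun z => ~ (Pi `\ v) z) x v].
have AB v : K v -> A_V src tgt x v Pi = B v.
  move=> Kv; apply/seteqP; split => w; last first.
    by apply: reach_mono => // e [].
  move=> h.
  have G : forall u, reach src tgt (fun e => w e = true) (fun z => ~ (Pi `\ v) z) u v ->
      C u -> reach src tgt (fun e => w e = true /\ FC e) (fun z => ~ (Pi `\ v) z) u v.
    apply: (@reach_ind1n _ _ _ _ _ _ (fun u => C u ->
      reach src tgt (fun e => w e = true /\ FC e) (fun z => ~ (Pi `\ v) z) u v)).
      by move=> _; exact: reach_refl.
    move=> u t e oku okt we hl _ IH Cu.
    have eFC : FC e by case: hl => [[hs _]|[_ ht]]; [left; rewrite hs|right; rewrite ht].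
    have [tv|ntv] := pselect (t = v).
      by subst t; apply: reach_step hl.
    have nPt : ~ Pi t by move=> Pt; apply: okt; split.
    have nPu := nPC u Cu.
    have Ct : C t.
      by apply: reach_trans Cu _; apply: (reach_step (e:=e)).
    apply: reach_trans (IH Ct); apply: (reach_step (e:=e)) => //.
  by apply: G h _; exact: reach_refl.
have hB v : detF Fc (B v).
  move=> w w' h hw; apply: reach_mono hw => // e [we eF]; split => //.
  by rewrite -h // FcE asboolT.
apply: (@le_trans _ _ (\sum_(v <- Ks) P (B v : set (Omega E)))%E).
  apply: (union_bound hp HP (Fc := Fc)) => //; first exact: finmap.fset_uniq.
    exact: conn_meas.
  move=> w hw.
  have Cfin : finite_set C by exact: hC.
  have [N hN] := C_ball Cfin.
  have [y [hy ny]] := hw N.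
  have nCy : ~ C y by move=> /hN.
  have G : forall u, reach src tgt (fun e => w e = true) (fun z => ~ set0 z) u y ->
      reach src tgt (fun e => w e = true) (fun z => ~ Pi z) x u ->
      exists k, k \in Ks /\ B k w.
    apply: (@reach_ind1n _ _ _ _ _ _ (fun u =>
      reach src tgt (fun e => w e = true) (fun z => ~ Pi z) x u ->
      exists k, k \in Ks /\ B k w)).
      by move=> h; case: nCy; apply: reach_mono h.
    move=> u t e _ _ we hl _ IH ho.
    have Cu : C u by apply: reach_mono ho.
    have nPu := nPC u Cu.
    have [Pt|nPt] := pselect (Pi t).
      have Kt : K t by split => //; exists u => //; exists e.
      exists t; split; first by rewrite KsE asboolT.
      rewrite -AB //; apply: reach_trans (reach_mono _ _ ho) _ => //.
        by move=> z nz [].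
      apply: reach_step hl => //; first by move=> [].
      by move=> [_]; apply.
    by apply: IH; apply: reach_trans ho _; apply: reach_step hl.
  by apply: G hy _; exact: reach_refl.
apply: esum_ge; exists K; first by split => // v [].
rewrite fsbig_finite // [X in (_ <= X)%E](eq_big_seq (fun v => P (B v : set (Omega E)))) //.
by move=> v; rewrite KsE => /asboolP Kv; rewrite AB.
Qed.

Lemma easy_E (P : probability (Omega E) R) p : 0 <= p <= 1 -> bernoulli_percolation p P ->
  forall Pi, edge_cutset src tgt x Pi ->
  (P (conn_inf src tgt x : set (Omega E)) <=
   \esum_(e in Pi) P (A_E src tgt x e Pi : set (Omega E)))%E.
Proof.
move=> hp HP Pi hC.
set C := [set y | reach src tgt (fun e => ~ Pi e) (fun _ => True) x y].
set FC := [set e | C (src e) \/ C (tgt e)].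
have FCfin : finite_set FC by exact: incset_fin.
set K := Pi `&` FC.
have Kfin : finite_set K by exact: finite_setIr.
set Fc := finmap.enum_fset (fset_set FC).
have FcE e : e \in Fc = `[< FC e >].
  by rewrite /Fc in_fset_set //; apply/idP/idP => [/set_mem/asboolP|/asboolP/mem_set].
set Ks := finmap.enum_fset (fset_set K).
have KsE v : v \in Ks = `[< K v >].
  by rewrite /Ks in_fset_set //; apply/idP/idP => [/set_mem/asboolP|/asboolP/mem_set].
pose RF (w : E -> bool) := reach src tgt (fun e' => w e' = true /\ ~ Pi e' /\ FC e') (fun _ => True).
pose B e : set (E -> bool) := [set w | FC e /\ w e = true /\
   exists t, (src e = t \/ tgt e = t) /\ RF w x t].
have AB e : K e -> A_E src tgt x e Pi = B e.
  move=> [Pe FCe]; apply/seteqP; split => w; last first.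
    move=> [_ [we [t [ht rt]]]]; split => //.
    have M : reach src tgt (fun e' => w e' = true /\ ~ (Pi `\ e) e') (fun _ => True) x t.
      by apply: reach_mono rt => // e' [we' [nP _]]; split => // -[].
    by case: ht => ht; [left|right]; rewrite ht.
  move=> [we hr]; split => //; split => //.
  have G : forall t, (src e = t \/ tgt e = t) ->
      reach src tgt (fun e' => w e' = true /\ ~ (Pi `\ e) e') (fun _ => True) x t ->
      exists t', (src e = t' \/ tgt e = t') /\ RF w x t'.
    move=> t ht h.
    have G2 : forall u, reach src tgt (fun e' => w e' = true /\ ~ (Pi `\ e) e') (fun _ => True) u t ->
        C u -> RF w x u -> exists t', (src e = t' \/ tgt e = t') /\ RF w x t'.
      apply: (@reach_ind1n _ _ _ _ _ _ (fun u => C u -> RF w x u ->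
        exists t', (src e = t' \/ tgt e = t') /\ RF w x t')).
        by move=> _ r; exists t.
      move=> u t1 e' _ _ [we' nB'] hl _ IH Cu ru.
      have [eu|neu] := pselect (src e = u \/ tgt e = u); first by exists u.
      have ne : e' <> e.
        move=> ee; apply: neu; rewrite -ee.
        by case: hl => [[hs _]|[_ ht1]]; [left|right].
      have nPe' : ~ Pi e' by move=> Pe'; apply: nB'; split.
      have FCe' : FC e'.
        by case: hl => [[hs _]|[_ ht1]]; [left; rewrite hs|right; rewrite ht1].
      have Ct1 : C t1 by apply: reach_trans Cu _; apply: (reach_step (e:=e')).
      apply: (IH Ct1); apply: reach_trans ru _; apply: (reach_step (e:=e')) => //.
    by apply: G2 h _ _; exact: reach_refl.
  by case: hr => h; [apply: G h; left|apply: G h; right].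
have hB e : detF Fc (B e).
  move=> w w' h [FCe [we [t [ht rt]]]]; split => //; split; first by rewrite -h // FcE asboolT.
  exists t; split => //; apply: reach_mono rt => // e' [we' [nP FCe']]; split => //.
  by rewrite -h // FcE asboolT.
apply: (@le_trans _ _ (\sum_(e <- Ks) P (B e : set (Omega E)))%E).
  apply: (union_bound hp HP (Fc := Fc)) => //; first exact: finmap.fset_uniq.
    exact: conn_meas.
  move=> w hw.
  have Cfin : finite_set C by exact: hC.
  have [N hN] := C_ball Cfin.
  have [y [hy ny]] := hw N.
  have nCy : ~ C y by move=> /hN.
  have G : forall u, reach src tgt (fun e => w e = true) (fun z => ~ set0 z) u y ->
      RF w x u -> exists k, k \in Ks /\ B k w.
    apply: (@reach_ind1n _ _ _ _ _ _ (fun u => RF w x u -> exists k, k \in Ks /\ B k w)).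
      by move=> h; case: nCy; apply: reach_mono h => // e [_ []].
    move=> u t e _ _ we hl _ IH ho.
    have Cu : C u by apply: reach_mono ho => // e' [_ []].
    have FCe : FC e.
      by case: hl => [[hs _]|[_ ht]]; [left; rewrite hs|right; rewrite ht].
    have [Pe|nPe] := pselect (Pi e).
      exists e; split; first by rewrite KsE asboolT.
      split => //; split => //; exists u; split => //.
      by case: hl => [[hs _]|[_ ht]]; [left|right].
    by apply: IH; apply: reach_trans ho _; apply: (reach_step (e:=e)).
  by apply: G hy _; exact: reach_refl.
apply: esum_ge; exists K; first by split => // v [].
rewrite fsbig_finite // [X in (_ <= X)%E](eq_big_seq (fun v => P (B v : set (Omega E)))) //.
by move=> v; rewrite KsE => /asboolP Kv; rewrite AB.
Qed.

End Easy.

Lemma sup01 (R : realType) (A : set R) : (forall a, A a -> 0 <= a <= 1) ->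
  (forall a, A a -> a <= sup A) /\ 0 <= sup A /\ sup A <= 1.
Proof.
move=> hA.
have ubA : has_ubound A by exists 1 => a /hA /andP[].
have ub : forall a, A a -> a <= sup A by move=> a Aa; exact: ub_le_sup.
split => //.
have [[a Aa]|nA] := pselect (exists a, A a); last first.
  have -> : A = set0 by apply/seteqP; split => // a Aa; apply: nA; exists a.
  by rewrite sup0 ler01 lexx.
have := hA a Aa => /andP[a0 a1]; split; first exact: le_trans a0 (ub a Aa).
by apply: ge_sup; [exists a | move=> b /hA /andP[]].
Qed.

Lemma sup_eq (R : realType) (X C : set R) :
  (forall a, C a -> 0 <= a <= 1) -> X `<=` C ->
  (forall p, 0 <= p -> p < sup C -> X p) -> sup X = sup C.
Proof.
move=> hC XC hX.
have hX01 : forall a, X a -> 0 <= a <= 1 by move=> a /XC /hC.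
have [ubC [C0 C1]] := sup01 hC.
have [ubX [X0 X1]] := sup01 hX01.
apply/eqP; rewrite eq_le; apply/andP; split.
  have [[a Xa]|nX] := pselect (exists a, X a); last first.
    have -> : X = set0 by apply/seteqP; split => // a Xa; apply: nX; exists a.
    by rewrite sup0.
  by apply: ge_sup; [exists a | move=> b /XC /ubC].
rewrite leNgt; apply/negP => lt.
have : X ((sup X + sup C) / 2) by apply: hX; lra.
move/ubX; lra.
Qed.

Lemma inf_pos (R : realType) (T : set (\bar R)) : (forall s, T s -> (0 <= s)%E) ->
  ereal_inf T != 0%E -> exists2 d : R, 0 < d & forall s, T s -> (d%:E <= s)%E.
Proof.
move=> h0 hne.
have i0 : (0 <= ereal_inf T)%E by apply: le_ereal_inf_tmp => s /h0.
have lb : forall s, T s -> (ereal_inf T <= s)%E by move=> s Ts; exact: ereal_inf_lbound.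
move: hne i0 lb; case: (ereal_inf T) => [r| |] // rn r0 lb.
  exists r; first by rewrite lt_def rn -lee_fin.
  by move=> s Ts; exact: lb.
exists 1 => // s Ts; apply: le_trans (lb s Ts); exact: leey.
Qed.

Lemma inf_posK (R : realType) (T : set (\bar R)) (P : Prop) : (forall s, T s -> (0 <= s)%E) ->
  ereal_inf T != 0%E -> (forall d : R, 0 < d -> (forall s, T s -> (d%:E <= s)%E) -> P) -> P.
Proof. by move=> h0 hne k; have [d d0 hd] := inf_pos h0 hne; exact: k d0 hd. Qed.

Section Main.
Variables (R : realType) (V E : choiceType) (src tgt : E -> V) (x : V)
  (Pf : R -> probability (Omega E) R).
Hypotheses (lf : locally_finite src tgt) (conn : connected_graph src tgt)
  (HB : forall p : R, 0 <= p <= 1 -> bernoulli_percolation p (Pf p)).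

Let setC := [set p : R | 0 <= p <= 1 /\ Pf p (conn_inf src tgt x : set (Omega E)) = 0%E].

Lemma core p d : 0 <= p -> p < sup setC -> 0 < d ->
  (forall n S, S `<=` Ball src tgt x n -> S x -> d <= psi src tgt x (Fq src tgt x n) p S) ->
  False.
Proof.
move=> p0 ppc d0 Hd.
have Cne : setC !=set0.
  apply: contrapT => nC.
  have C0 : setC = set0 by apply/seteqP; split => // a Ca; apply: nC; exists a.
  by move: ppc; rewrite C0 sup0; lra.
have [q [q01 Pq] pq] := sup_gt Cne ppc.
have /andP[q0 q1] := q01.
set c := Num.min (2^-1) (d * (q - p) / 2).
have c0 : 0 < c by rewrite lt_min invr_gt0 ltr0n /= divr_gt0 // mulr_gt0 // subr_gt0.
have : (c%:E <= Pf q (conn_inf src tgt x : set (Omega E)))%E.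
  apply: (conn_inf_lb lf (HB q01)) => n.
  apply: (dct_bound (hx src tgt x n) (hL src tgt x n) (hLam x lf n) (hFq src tgt x n) (hF x lf n)) => //.
  by move=> S SB Sx; apply: Hd.
by rewrite Pq lee_fin; lra.
Qed.

Lemma pc01 : forall a, setC a -> 0 <= a <= 1.
Proof. by move=> a []. Qed.

Lemma cutE_eq : p'_cut_E src tgt x Pf = p_c src tgt x Pf.
Proof.
apply: sup_eq; first exact: pc01.
  move=> p [p01 hinf]; split => //.
  apply/eqP; rewrite eq_le measure_ge0 andbT -hinf.
  apply: le_ereal_inf_tmp => s [Pi [hPi ->]].
  exact: (easy_E lf conn p01 (HB p01) hPi).
move=> p p0 ppc; have p1 : p <= 1.
  by have [_ [_ C1]] := sup01 pc01; lra.
have p01 : 0 <= p <= 1 by rewrite p0 p1.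
split => //; apply/eqP; apply: contrapT => /negP hne.
apply: (inf_posK _ hne) => [s [Pi [_ ->]]|d d0 hd].
  by apply: esum_ge0 => e _; exact: measure_ge0.
apply: (core p0 ppc d0) => n S SB Sx.
rewrite -lee_fin; apply: le_trans (edge_sum lf SB Sx p01 (HB p01)).
apply: hd; exists (Bd src tgt S); split => //.
have H := edge_cut lf SB Sx; exact: H.
Qed.

Lemma cutV_eq : p'_cut_V src tgt x Pf = p_c src tgt x Pf.
Proof.
apply: sup_eq; first exact: pc01.
  move=> p [p01 hinf]; split => //.
  apply/eqP; rewrite eq_le measure_ge0 andbT -hinf.
  apply: le_ereal_inf_tmp => s [Pi [hPi ->]].
  exact: (easy_V lf conn p01 (HB p01) hPi).
move=> p p0 ppc; have p1 : p <= 1.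
  by have [_ [_ C1]] := sup01 pc01; lra.
have p01 : 0 <= p <= 1 by rewrite p0 p1.
split => //; apply/eqP; apply: contrapT => /negP hne.
apply: (inf_posK _ hne) => [s [Pi [_ ->]]|d d0 hd].
  by apply: esum_ge0 => e _; exact: measure_ge0.
apply: (core p0 ppc d0) => n S SB Sx.
rewrite -lee_fin; apply: le_trans (vertex_sum lf SB Sx p01 (HB p01)).
apply: hd; exists (PiV src tgt S); split => //.
have H := vertex_cut lf SB Sx; exact: H.
Qed.

End Main.

Unset Implicit Arguments.
Theorem theorem1p6 (R : realType) (V E : choiceType) (src tgt : E -> V)
  (x : V) (Pf : R -> probability (Omega E) R) :
  simple_graph src tgt ->
  locally_finite src tgt ->
  connected_graph src tgt ->
  @infinite_graph V ->
  (forall p : R, 0 <= p <= 1 -> bernoulli_percolation p (Pf p)) ->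
  p'_cut_E src tgt x Pf = p'_cut_V src tgt x Pf /\
  p'_cut_V src tgt x Pf = p_c src tgt x Pf.
Proof.
move=> _ lf conn _ HB.
by rewrite (cutE_eq x lf conn HB) (cutV_eq x lf conn HB).
Qed.
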